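(* Consider the following RSS-based localization setting. A stationary target is at an unknown position $\mathbf{s}=(x,y,0)\in\mathbb{R}^3$. There are $N$ UAVs; UAV $i$ ($1\le i\le N$) takes $M_i\ge 1$ measurements, the $j$-th one at position $\mathbf{u}_{i,j}=(x_{i,j},y_{i,j},h_{i,j})$. Let $r_{i,j}=\sqrt{(x-x_{i,j})^2+(y-y_{i,j})^2}$ (horizontal distance), $d_{i,j}=\sqrt{r_{i,j}^2+h_{i,j}^2}$, and let $\beta_{i,j}$ be the horizontal UAV–target angle, i.e. $(x_{i,j}-x,\,y_{i,j}-y)=r_{i,j}(\cos\beta_{i,j},\sin\beta_{i,j})$, with $\mathbf{g}_{i,j}=(\cos\beta_{i,j},\sin\beta_{i,j})^T$. The $j$-th measurement of UAV $i$ is $R_{i,j}=p_0-10\gamma\log_{10}(d_{i,j})+\eta_{i,j}$ with known $p_0$, $\gamma>0$ and independent noises $\eta_{i,j}\sim\mathcal{N}(0,\sigma_i^2)$, $\sigma_i>0$. The Fisher information matrix for $(x,y)$ is $$\mathbf{F}=\Big(\frac{10\gamma}{\ln 10}\Big)^2\sum_{i=1}^N\sum_{j=1}^{M_i}\sigma_i^{-2}\frac{r_{i,j}^2}{d_{i,j}^4}\mathbf{g}_{i,j}\mathbf{g}_{i,j}^T.$$ A configuration (choice of all $\mathbf{u}_{i,j}$) is feasible if $r_{i,j}\ge r_0$, $h_{i,j}\ge h_0$ for all $i,j$, and $\|\mathbf{u}_{i,j}-\mathbf{u}_{i,j-1}\|\le t_0c_{\max}$ for $2\le j\le M_i$, where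 $r_0,h_0,t_0>0$ and $c_{\max}\ge 0$ are given. Problem P is to maximize $\det\mathbf{F}$ over feasible configurations. Assume the UAVs hover, i.e. $c_{\max}=0$, so $\mathbf{u}_{i,j}=\mathbf{u}_i$ (and $r_{i,j}=r_i$, $h_{i,j}=h_i$, $d_{i,j}=d_i$, $\mathbf{g}_{i,j}=\mathbf{g}_i$) for all $j$. Let $t$ be an index with $M_t\sigma_t^{-2}=\max\{M_i\sigma_i^{-2}:1\le i\le N\}$, and let $r^*=\max\{r_0,h_0\}$. If $M_t\sigma_t^{-2}\le\frac12\sum_{i=1}^N M_i\sigma_i^{-2}$, then any configuration satisfying $r_i=r^*$ and $h_i=h_0$ for all $i=1,\dots,N$, together with $$\sum_{i=1}^N M_i\sigma_i^{-2}\frac{r_i^2}{d_i^4}\mathbf{g}_i\mathbf{g}_i^T=\frac12\Big(\sum_{i=1}^N M_i\sigma_i^{-2}\frac{r_i^2}{d_i^4}\Big)\mathbf{I},$$ is an optimal solution of problem P.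
   Context: $\mathbf{I}$ is the $2\times 2$ identity matrix. All UAV positions are known to the UAVs; the optimization is over UAV positions for a given target position $\mathbf{s}$. *)

(* Defs.v *)
From HB Require Import structures.
From mathcomp Require Import all_boot all_order all_algebra.
From mathcomp Require Import all_classical all_reals exp.
Set Implicit Arguments. Unset Strict Implicit. Unset Printing Implicit Defensive.
Import Order.TTheory GRing.Theory Num.Theory.
Local Open Scope ring_scope.

Section RSS.
Variable R : realType.

(* A point3 (x, y, h) of R^3 is encoded as ((x, y), h). *)
Definition point3 := (R * R * R)%type.

(* A configuration: U i j is the position of the j-th measurement of UAV i
   (0-based: j ranges over 0 <= j < M i; values for j >= M i are irrelevant). *)
Definition config (N : nat) := 'I_N -> nat -> point3.

Definition hdist (x y : R) (u : point3) : R :=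
  Num.sqrt ((x - u.1.1) ^+ 2 + (y - u.1.2) ^+ 2).

Definition height (u : point3) : R := u.2.

Definition dist3 (x y : R) (u : point3) : R :=
  Num.sqrt (hdist x y u ^+ 2 + height u ^+ 2).

Definition gvec (x y : R) (u : point3) : 'cV[R]_2 :=
  \col_(k < 2) (if k == 0 :> nat then (u.1.1 - x) / hdist x y u
                else (u.1.2 - y) / hdist x y u).

Definition norm3 (u v : point3) : R :=
  Num.sqrt ((u.1.1 - v.1.1) ^+ 2 + (u.1.2 - v.1.2) ^+ 2 + (u.2 - v.2) ^+ 2).

Definition FIM (N : nat) (M : 'I_N -> nat) (sigma : 'I_N -> R) (gamma : R)
    (x y : R) (U : config N) : 'M[R]_2 :=
  ((10%:R * gamma / ln (10%:R : R)) ^+ 2) *: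
    \sum_(i < N) \sum_(j < M i)
       ((sigma i ^+ 2)^-1 * (hdist x y (U i j) ^+ 2 / dist3 x y (U i j) ^+ 4))
         *: (gvec x y (U i j) *m (gvec x y (U i j))^T).

Definition feasible (N : nat) (M : 'I_N -> nat) (r0 h0 t0 cmax x y : R)
    (U : config N) : Prop :=
  forall (i : 'I_N) (j : nat), (j < M i)%N ->
    [/\ r0 <= hdist x y (U i j), h0 <= height (U i j)
      & (1 <= j)%N -> norm3 (U i j) (U i j.-1) <= t0 * cmax].

Definition optimal (N : nat) (M : 'I_N -> nat) (sigma : 'I_N -> R) (gamma : R)
    (r0 h0 t0 cmax x y : R) (U : config N) : Prop :=
  feasible M r0 h0 t0 cmax x y U /\
  forall U' : config N, feasible M r0 h0 t0 cmax x y U' ->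
    \det (FIM M sigma gamma x y U') <= \det (FIM M sigma gamma x y U).

Definition hover (N : nat) (u : 'I_N -> point3) : config N := fun i _ => u i.

End RSS.

(* Main.v *)
Require Import Defs.
From HB Require Import structures.
From mathcomp Require Import all_boot all_order all_algebra.
From mathcomp Require Import all_classical all_reals exp.
From mathcomp Require Import ring lra.
Import Order.TTheory GRing.Theory Num.Theory.
Local Open Scope ring_scope.

Lemma det22 (R : comPzRingType) (A : 'M[R]_2) : \det A = A 0 0 * A 1 1 - A 0 1 * A 1 0.
Proof.
rewrite (expand_det_row _ 0) !big_ord_recl big_ord0 addr0 /cofactor.
rewrite !det_mx11 /= !mxE /=.
have E1 : forall (i j : 'I_2), val i = val j -> i = j by move=> i j; apply: val_inj.
rewrite (E1 (lift (lift _ _) _) 0) //.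
rewrite (E1 (lift _ _) 1) //.
rewrite /bump /= expr0 expr1 mul1r mulN1r mulrN mulrC.
rewrite (E1 ord0 0) //.
Qed.

Lemma key (R : realFieldType) (p q P Q : R) : 0 < Q -> Q <= q -> 0 <= p ->
  (P = Q \/ (Q <= P /\ P <= p)) -> p / (p + q) ^+ 2 <= P / (P + Q) ^+ 2.
Proof.
move=> hQ hq hp hP.
have h1 : 0 < (p + q) ^+ 2 by rewrite exprn_gt0 //; lra.
have h2 : 0 < (P + Q) ^+ 2.
  by rewrite exprn_gt0 //; case: hP => [->|[hP _]]; lra.
rewrite ler_pdivrMr // mulrAC ler_pdivlMr //.
have A : p * (p + Q) ^+ 2 <= p * (p + q) ^+ 2.
  apply: ler_wpM2l => //; rewrite lerXn2r ?nnegrE; lra.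
case: hP => [->|[hP1 hP2]].
  have B0 : 0 <= p * (q - Q) by apply: mulr_ge0; lra.
  have B1 : 0 <= (p - q) ^+ 2 by apply: sqr_ge0.
  have B : 4%:R * p * Q <= (p + q) ^+ 2 by nra.
  have B2 : 0 <= Q * ((p + q) ^+ 2 - 4%:R * p * Q) by apply: mulr_ge0; lra.
  nra.
have B3 : Q * Q <= p * P by apply: ler_pM; lra.
have B : (p - P) * (Q ^+ 2 - p * P) <= 0.
  apply: mulr_ge0_le0; rewrite ?expr2; lra.
have C : P * (p + Q) ^+ 2 <= P * (p + q) ^+ 2.
  apply: ler_wpM2l; first lra. rewrite lerXn2r ?nnegrE; lra.
nra.
Qed.

Lemma det_le (R : realFieldType) (a b d : R) : a * d - b * b <= ((a + d) / 2%:R) ^+ 2.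
Proof. have := sqr_ge0 (a - d); have := sqr_ge0 b; nra. Qed.

Lemma sqrt4 (R : realType) (a : R) : 0 <= a -> Num.sqrt a ^+ 4 = a ^+ 2.
Proof. by move=> ha; rewrite -[4%N]/(2 * 2)%N exprM sqr_sqrtr. Qed.

Lemma hdist_sq (R : realType) (x y : R) u :
  hdist x y u ^+ 2 = (x - u.1.1) ^+ 2 + (y - u.1.2) ^+ 2.
Proof. by rewrite /hdist sqr_sqrtr // addr_ge0 // sqr_ge0. Qed.

Lemma gvec_sq (R : realType) (x y : R) u : 0 < hdist x y u ->
  gvec x y u 0 0 ^+ 2 + gvec x y u 1 0 ^+ 2 = 1.
Proof.
move=> h; rewrite !mxE /=.
have e : (u.1.1 - x) ^+ 2 + (u.1.2 - y) ^+ 2 = hdist x y u ^+ 2.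
  by rewrite hdist_sq; ring.
by rewrite !expr_div_n -mulrDl e divff // expf_neq0 // gt_eqF.
Qed.

Lemma FIM_entry (R : realType) N (M : 'I_N -> nat) sigma gamma (x y : R) U k l :
  FIM M sigma gamma x y U k l =
  (10%:R * gamma / ln (10%:R : R)) ^+ 2 *
  \sum_(i < N) \sum_(j < M i)
     ((sigma i ^+ 2)^-1 * (hdist x y (U i j) ^+ 2 / dist3 x y (U i j) ^+ 4))
     * (gvec x y (U i j) k 0 * gvec x y (U i j) l 0).
Proof.
rewrite /FIM mxE summxE; congr (_ * _); apply: eq_bigr => i _.
rewrite summxE; apply: eq_bigr => j _.
rewrite mxE; congr (_ * _); by rewrite mxE big_ord1 !mxE.
Qed.

Theorem theorem3 (R : realType) (N : nat) (M : 'I_N -> nat)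
    (hM : forall i, (1 <= M i)%N)
    (sigma : 'I_N -> R) (hsigma : forall i, 0 < sigma i)
    (gamma : R) (hgamma : 0 < gamma)
    (r0 h0 t0 cmax : R) (hr0 : 0 < r0) (hh0 : 0 < h0) (ht0 : 0 < t0)
    (hcmax : cmax = 0)
    (x y : R)
    (t : 'I_N)
    (ht : forall i, (M i)%:R / sigma i ^+ 2 <= (M t)%:R / sigma t ^+ 2)
    (hbal : (M t)%:R / sigma t ^+ 2
            <= 2^-1 * \sum_(i < N) (M i)%:R / sigma i ^+ 2)
    (u : 'I_N -> point3 R)
    (hr : forall i, hdist x y (u i) = Num.max r0 h0)
    (hh : forall i, height (u i) = h0)
    (hiso : \sum_(i < N)
              ((M i)%:R / sigma i ^+ 2 * (hdist x y (u i) ^+ 2 / dist3 x y (u i) ^+ 4))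
                *: (gvec x y (u i) *m (gvec x y (u i))^T)
            = (2^-1 * \sum_(i < N)
                 ((M i)%:R / sigma i ^+ 2 * (hdist x y (u i) ^+ 2 / dist3 x y (u i) ^+ 4)))
                *: 1%:M) :
  optimal M sigma gamma r0 h0 t0 cmax x y (hover u).
Proof.
split.
  move=> i j _; split; rewrite /hover ?hr ?hh.
  - by rewrite le_max lexx.
  - by [].
  - by move=> _; rewrite /norm3 !subrr expr0n /= !addr0 sqrtr0 hcmax mulr0.
move=> U' hU'.
set K := (10%:R * gamma / ln (10%:R : R)) ^+ 2.
set astar := Num.max r0 h0 ^+ 2 / Num.sqrt (Num.max r0 h0 ^+ 2 + h0 ^+ 2) ^+ 4.
set S := \sum_(i < N) (M i)%:R / sigma i ^+ 2 * astar.
set T := \sum_(i < N) \sum_(j < M i)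
     ((sigma i ^+ 2)^-1 * (hdist x y (U' i j) ^+ 2 / dist3 x y (U' i j) ^+ 4)).
have hK : 0 <= K by rewrite /K sqr_ge0.
have st1 : \det (FIM M sigma gamma x y U') <= ((K * T) / 2%:R) ^+ 2.
  rewrite det22 !FIM_entry.
  have -> : \sum_(i < N) \sum_(j < M i)
     ((sigma i ^+ 2)^-1 * (hdist x y (U' i j) ^+ 2 / dist3 x y (U' i j) ^+ 4))
     * (gvec x y (U' i j) 1 0 * gvec x y (U' i j) 0 0) =
     \sum_(i < N) \sum_(j < M i)
     ((sigma i ^+ 2)^-1 * (hdist x y (U' i j) ^+ 2 / dist3 x y (U' i j) ^+ 4))
     * (gvec x y (U' i j) 0 0 * gvec x y (U' i j) 1 0).
    by apply: eq_bigr => i _; apply: eq_bigr => j _; rewrite [_ 1 0 * _]mulrC.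
  have -> : K * T = K * (\sum_(i < N) \sum_(j < M i)
     ((sigma i ^+ 2)^-1 * (hdist x y (U' i j) ^+ 2 / dist3 x y (U' i j) ^+ 4))
     * (gvec x y (U' i j) 0 0 * gvec x y (U' i j) 0 0)) + K * (\sum_(i < N) \sum_(j < M i)
     ((sigma i ^+ 2)^-1 * (hdist x y (U' i j) ^+ 2 / dist3 x y (U' i j) ^+ 4))
     * (gvec x y (U' i j) 1 0 * gvec x y (U' i j) 1 0)).
    rewrite -mulrDr -big_split /T; congr (_ * _); apply: eq_bigr => i _.
    rewrite -big_split; apply: eq_bigr => j hj /=.
    have [h1 _ _] := hU' i j (ltn_ord j).
    by rewrite -mulrDr -!expr2 gvec_sq ?mulr1 //; exact: (lt_le_trans hr0 h1).
  exact: det_le.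
have st2 : \det (FIM M sigma gamma x y (hover u)) = (K * (2^-1 * S)) ^+ 2.
  rewrite /FIM /hover.
  have -> : \sum_(i < N) \sum_(j < M i)
       ((sigma i ^+ 2)^-1 * (hdist x y (u i) ^+ 2 / dist3 x y (u i) ^+ 4))
         *: (gvec x y (u i) *m (gvec x y (u i))^T) =
     \sum_(i < N)
              ((M i)%:R / sigma i ^+ 2 * (hdist x y (u i) ^+ 2 / dist3 x y (u i) ^+ 4))
                *: (gvec x y (u i) *m (gvec x y (u i))^T).
    apply: eq_bigr => i _.
    by rewrite sumr_const card_ord scalerMnl -mulr_natl mulrA.
  rewrite hiso scalerA scalemx1 det_scalar; congr ((_ * (_ * _)) ^+ 2).
  apply: eq_bigr => i _; congr (_ * _).
  by rewrite /astar /dist3 hr hh.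
have hT0 : 0 <= T.
  apply: sumr_ge0 => i _; apply: sumr_ge0 => j _.
  apply: mulr_ge0; first by rewrite invr_ge0 sqr_ge0.
  by apply: divr_ge0; rewrite ?sqr_ge0 // exprn_ge0 // sqrtr_ge0.
have hTS : T <= S.
  apply: ler_sum => i _.
  have -> : (M i)%:R / sigma i ^+ 2 * astar = \sum_(j < M i) ((sigma i ^+ 2)^-1 * astar).
    by rewrite sumr_const card_ord -[in RHS]mulr_natl mulrA.
  apply: ler_sum => j hj.
  apply: ler_wpM2l; first by rewrite invr_ge0 sqr_ge0.
  have [h1 h2 _] := hU' (i) (val j) (ltn_ord j).
  rewrite /astar /dist3 !sqrt4 ?addr_ge0 ?sqr_ge0 //.
  apply: key.
  - by rewrite exprn_gt0.
  - rewrite lerXn2r ?nnegrE //; [exact: ltW hh0 | exact: le_trans (ltW hh0) h2].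
  - exact: sqr_ge0.
  - have [le|lt] := leP r0 h0.
      by left.
    right.
    split; first by rewrite lerXn2r ?nnegrE //; lra.
    rewrite lerXn2r ?nnegrE //; [exact: ltW hr0 | exact: le_trans (ltW hr0) h1].
rewrite st2; apply: (le_trans st1).
have hKT : K * T <= K * S by apply: ler_wpM2l.
have hKT0 : 0 <= K * T by apply: mulr_ge0.
have -> : K * (2^-1 * S) = K * S / 2%:R by rewrite mulrCA mulrC.
rewrite lerXn2r ?nnegrE //; lra.
Qed.
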